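(* Let $F$ be a PLSEM-function and $\sigma$ a permutation of $\{1,\dots,p\}$. For $x\in\mathbb{R}^p$ let $\Pi^\sigma_{i+1}(x)$ be the orthogonal projection onto $\mathrm{span}\{\partial_{\sigma^{-1}(i+1)}F(x),\dots,\partial_{\sigma^{-1}(p)}F(x)\}$ for $i<p$ and $\Pi^\sigma_{p+1}:=0$. If $(\mathrm{Id}-\Pi^\sigma_{i+1}(x))\,\partial^2_{\sigma^{-1}(i)}F(x)=0$ for all $x\in\mathbb{R}^p$ and $i=1,\dots,p$, then the matrices $\Pi^\sigma_{i+1}(x)$ and the vectors $(\mathrm{Id}-\Pi^\sigma_{i+1}(x))\,\partial_{\sigma^{-1}(i)}F(x)$ do not depend on $x$, for $i=1,\dots,p$.
   Context: A PLSEM with DAG $D$ on $\{1,\dots,p\}$ is a system $X_j=\mu_j+\sum_{i\in\mathrm{pa}_D(j)} f_{j,i}(X_i)+\varepsilon_j$, $j=1,\dots,p$, where $\mu_j\in\mathbb{R}$, $f_{j,i}\in C^2(\mathbb{R})$, $f_{j,i}\not\equiv 0$, $\mathbb{E}[f_{j,i}(X_i)]=0$, and $\varepsilon_1,\dots,\varepsilon_p$ are mutually independent with $\varepsilon_j\sim\mathcal{N}(0,\sigma_j^2)$, $\sigma_j^2>0$. Its PLSEM-function is $F(x)_j=\frac{1}{\sigma_j}\big(x_j-\mu_j-\sum_{i\in\mathrm{pa}_D(j)}f_{j,i}(x_i)\big)$. $\partial_kF$, $\partial_k^2F$ denote the vectors of first and second partial derivatives of the components of $F$ in $x_k$. *)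

(* Defs.v *)
(* classical reals. Indices are 0-based: 0..p-1. *)
From Stdlib Require Import Reals List Arith.
From Stdlib Require Import Relations.Relation_Operators.
Open Scope R_scope.

Definition sumR (n : nat) (g : nat -> R) : R :=
  fold_right Rplus 0 (map g (seq 0 n)).

(* vectors of R^p : nat -> R (only indices < p matter);
   p x p matrices : nat -> nat -> R *)
Definition mat_app (p : nat) (P : nat -> nat -> R) (v : nat -> R) : nat -> R :=
  fun j => sumR p (fun k => P j k * v k).

Definition dotp (p : nat) (v w : nat -> R) : R := sumR p (fun j => v j * w j).

Definition in_span (p : nat) (mem : nat -> bool) (u : nat -> nat -> R)
  (v : nat -> R) : Prop :=
  exists c : nat -> R, forall j, (j < p)%nat ->
    v j = sumR p (fun l => if mem l then c l * u l j else 0).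

Definition is_orth_proj (p : nat) (mem : nat -> bool) (u : nat -> nat -> R)
  (P : nat -> nat -> R) : Prop :=
  forall v : nat -> R,
    in_span p mem u (mat_app p P v) /\
    (forall l, (l < p)%nat -> mem l = true ->
       dotp p (fun j => v j - mat_app p P v j) (u l) = 0).

(* directed graph on {0..p-1}: pa j i = true iff i is a parent of j *)
Definition is_DAG (p : nat) (pa : nat -> nat -> bool) : Prop :=
  (forall j i, pa j i = true -> (i < p)%nat /\ (j < p)%nat) /\
  (forall i, ~ clos_trans nat (fun a b => pa b a = true) i i).

Definition C2 (g : R -> R) : Prop :=
  exists g1 g2 : R -> R,
    (forall t, derivable_pt_lim g t (g1 t)) /\
    (forall t, derivable_pt_lim g1 t (g2 t)) /\
    continuity g2.

(* The PLSEM-function F(x)_j = (x_j - mu_j - sum_{i in pa(j)} f_{j,i}(x_i)) / s_j,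
   where s_j = sigma_j is the noise standard deviation. *)
Definition plsem_F (p : nat) (pa : nat -> nat -> bool) (mu s : nat -> R)
  (f : nat -> nat -> R -> R) (x : nat -> R) : nat -> R :=
  fun j => (x j - mu j - sumR p (fun i => if pa j i then f j i (x i) else 0)) / s j.

Definition plsem_params (p : nat) (pa : nat -> nat -> bool) (mu s : nat -> R)
  (f : nat -> nat -> R -> R) : Prop :=
  is_DAG p pa /\
  (forall j, (j < p)%nat -> 0 < s j) /\
  (forall j i, pa j i = true -> C2 (f j i) /\ exists t, f j i t <> 0).

Definition upd (x : nat -> R) (k : nat) (t : R) : nat -> R :=
  fun m => if Nat.eqb m k then t else x m.

Definition is_partial (p : nat) (G : (nat -> R) -> nat -> R)
  (dG : nat -> (nat -> R) -> nat -> R) : Prop :=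
  forall k x j, (k < p)%nat -> (j < p)%nat ->
    derivable_pt_lim (fun t => G (upd x k t) j) (x k) (dG k x j).

Definition is_perm_with_inv (p : nat) (sigma sigma_inv : nat -> nat) : Prop :=
  forall i, (i < p)%nat ->
    (sigma i < p)%nat /\ (sigma_inv i < p)%nat /\
    sigma (sigma_inv i) = i /\ sigma_inv (sigma i) = i.

Definition is_second_partial (p : nat) (dG d2G : nat -> (nat -> R) -> nat -> R) : Prop :=
  forall k x j, (k < p)%nat -> (j < p)%nat ->
    derivable_pt_lim (fun t => dG k (upd x k t) j) (x k) (d2G k x j).

(* Main.v *)
Require Import Defs.
From Stdlib Require Import Reals List Arith Lra Lia FunctionalExtensionality IndefiniteDescription.
Open Scope R_scope.

Lemma fold_plus_acc (l : list R) a : fold_right Rplus a l = fold_right Rplus 0 l + a.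
Proof. induction l; simpl; [ring| rewrite IHl; ring]. Qed.

Lemma sumR_S n g : sumR (S n) g = sumR n g + g n.
Proof. unfold sumR. rewrite seq_S, map_app, fold_right_app. simpl. rewrite fold_plus_acc. ring. Qed.

Lemma sumR_ext n g h : (forall k, (k < n)%nat -> g k = h k) -> sumR n g = sumR n h.
Proof.
  induction n; intros H; [reflexivity|].
  rewrite !sumR_S, IHn by (intros; apply H; lia). rewrite H by lia. reflexivity.
Qed.

Lemma sumR_plus n g h : sumR n (fun k => g k + h k) = sumR n g + sumR n h.
Proof. induction n; [simpl; unfold sumR; simpl; ring|]. rewrite !sumR_S, IHn. ring. Qed.

Lemma sumR_minus n g h : sumR n (fun k => g k - h k) = sumR n g - sumR n h.
Proof. induction n; [simpl; unfold sumR; simpl; ring|]. rewrite !sumR_S, IHn. ring. Qed.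

Lemma sumR_scal n c g : c * sumR n g = sumR n (fun k => c * g k).
Proof. induction n; [unfold sumR; simpl; ring|]. rewrite !sumR_S, <- IHn. ring. Qed.

Lemma sumR_zero n g : (forall k, (k < n)%nat -> g k = 0) -> sumR n g = 0.
Proof.
  intros H. transitivity (sumR n (fun _ => 0)).
  - apply sumR_ext; auto.
  - induction n; [reflexivity|]. rewrite sumR_S, IHn; [ring|]. intros; apply H; lia.
Qed.

Lemma sumR_swap n m h :
  sumR n (fun a => sumR m (fun b => h a b)) = sumR m (fun b => sumR n (fun a => h a b)).
Proof.
  induction n.
  - unfold sumR at 1. simpl. symmetry. apply sumR_zero. intros; reflexivity.
  - rewrite sumR_S, IHn, <- sumR_plus. apply sumR_ext. intros. rewrite sumR_S. reflexivity.
Qed.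

Lemma sumR_delta n g b : (b < n)%nat ->
  sumR n (fun k => g k * (if Nat.eqb k b then 1 else 0)) = g b.
Proof.
  induction n; intros Hb; [lia|]. rewrite sumR_S.
  destruct (Nat.eq_dec b n).
  - subst. rewrite Nat.eqb_refl. rewrite sumR_zero; [ring|].
    intros k Hk. destruct (Nat.eqb_spec k n); [lia| ring].
  - rewrite IHn by lia. destruct (Nat.eqb_spec n b); [lia| ring].
Qed.

Lemma sumR_nonneg n g : (forall k, (k < n)%nat -> 0 <= g k) -> 0 <= sumR n g.
Proof.
  induction n; intros H; [unfold sumR; simpl; lra|].
  rewrite sumR_S. assert (0 <= sumR n g) by (apply IHn; intros; apply H; lia).
  assert (0 <= g n) by (apply H; lia). lra.
Qed.

Lemma sumR_nonneg_zero n g : (forall k, (k < n)%nat -> 0 <= g k) -> sumR n g = 0 ->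
  forall k, (k < n)%nat -> g k = 0.
Proof.
  induction n; intros H Hs k Hk; [lia|]. rewrite sumR_S in Hs.
  assert (0 <= sumR n g) by (apply sumR_nonneg; intros; apply H; lia).
  assert (0 <= g n) by (apply H; lia).
  destruct (Nat.eq_dec k n). { subst. lra. }
  apply IHn; [intros; apply H; lia | lra | lia].
Qed.

Lemma in_span_ext p mem u v w : (forall j, (j < p)%nat -> v j = w j) ->
  in_span p mem u w -> in_span p mem u v.
Proof. intros H [c Hc]. exists c. intros j Hj. rewrite H by auto. auto. Qed.

Lemma in_span_gen p mem u l : (l < p)%nat -> mem l = true -> in_span p mem u (u l).
Proof.
  intros Hl Hm. exists (fun m => if Nat.eqb m l then 1 else 0). intros j Hj.
  transitivity (sumR p (fun m => (if mem m then u m j else 0) * (if Nat.eqb m l then 1 else 0))).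
  - rewrite sumR_delta by auto. rewrite Hm. reflexivity.
  - apply sumR_ext. intros k _. destruct (mem k), (Nat.eqb k l); ring.
Qed.

Lemma in_span_add p mem u v w : in_span p mem u v -> in_span p mem u w ->
  in_span p mem u (fun j => v j + w j).
Proof.
  intros [c Hc] [d Hd]. exists (fun l => c l + d l). intros j Hj.
  rewrite Hc, Hd, <- sumR_plus by auto. apply sumR_ext. intros k _. destruct (mem k); ring.
Qed.

Lemma in_span_sub p mem u v w : in_span p mem u v -> in_span p mem u w ->
  in_span p mem u (fun j => v j - w j).
Proof.
  intros [c Hc] [d Hd]. exists (fun l => c l - d l). intros j Hj.
  rewrite Hc, Hd, <- sumR_minus by auto. apply sumR_ext. intros k _. destruct (mem k); ring.
Qed.

Lemma in_span_trans p mem u mem' u' v :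
  (forall l, (l < p)%nat -> mem l = true -> in_span p mem' u' (u l)) ->
  in_span p mem u v -> in_span p mem' u' v.
Proof.
  intros H [c Hc].
  assert (Hch : exists D : nat -> nat -> R, forall l, (l < p)%nat -> mem l = true ->
     forall j, (j < p)%nat -> u l j = sumR p (fun m => if mem' m then D l m * u' m j else 0)).
  { apply (functional_choice (fun l d => (l < p)%nat -> mem l = true ->
     forall j, (j < p)%nat -> u l j = sumR p (fun m => if mem' m then d m * u' m j else 0))).
    intros l. destruct (lt_dec l p) as [Hl|Hl].
    - destruct (mem l) eqn:Hm.
      + destruct (H l Hl Hm) as [d Hd]. exists d. intros; auto.
      + exists (fun _ => 0). intros _ E; discriminate.
    - exists (fun _ => 0). intros E; lia. }
  destruct Hch as [D HD].
  exists (fun m => sumR p (fun l => if mem l then c l * D l m else 0)).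
  intros j Hj. rewrite Hc by auto.
  transitivity (sumR p (fun l => sumR p (fun m =>
     if mem l then c l * (if mem' m then D l m * u' m j else 0) else 0))).
  - apply sumR_ext. intros l Hl. destruct (mem l) eqn:Hm.
    + rewrite (HD l Hl Hm j Hj). apply sumR_scal.
    + symmetry. apply sumR_zero. auto.
  - rewrite sumR_swap. apply sumR_ext. intros m Hm'. destruct (mem' m).
    + rewrite Rmult_comm, sumR_scal. apply sumR_ext. intros l _. destruct (mem l); ring.
    + apply sumR_zero. intros l _. destruct (mem l); ring.
Qed.

Lemma in_span_mono p mem mem' u v : (forall l, (l < p)%nat -> mem l = true -> mem' l = true) ->
  in_span p mem u v -> in_span p mem' u v.
Proof. intros H. apply in_span_trans. intros l Hl Hm. apply in_span_gen; auto. Qed.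

Lemma orth_span p mem u w v : (forall l, (l < p)%nat -> mem l = true -> dotp p w (u l) = 0) ->
  in_span p mem u v -> dotp p w v = 0.
Proof.
  intros H [c Hc]. unfold dotp.
  transitivity (sumR p (fun j => sumR p (fun l => w j * (if mem l then c l * u l j else 0)))).
  - apply sumR_ext. intros j Hj. rewrite Hc by auto. apply sumR_scal.
  - rewrite sumR_swap. apply sumR_zero. intros l Hl. destruct (mem l) eqn:Hm.
    + transitivity (c l * dotp p w (u l)).
      * unfold dotp. rewrite sumR_scal. apply sumR_ext. intros; ring.
      * rewrite H by auto. ring.
    + apply sumR_zero. intros; ring.
Qed.

Lemma dotp_self_zero p d : dotp p d d = 0 -> forall j, (j < p)%nat -> d j = 0.
Proof.
  intros H j Hj. unfold dotp in H.
  assert (E : d j * d j = 0).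
  { apply (sumR_nonneg_zero p (fun j => d j * d j)); auto. intros; apply Rle_0_sqr. }
  destruct (Rmult_integral _ _ E); auto.
Qed.

Lemma dotp_minus p a b w : dotp p (fun j => a j - b j) w = dotp p a w - dotp p b w.
Proof. unfold dotp. rewrite <- sumR_minus. apply sumR_ext. intros; ring. Qed.

Lemma dotp_ext p a b w : (forall j, (j < p)%nat -> a j = b j) -> dotp p a w = dotp p b w.
Proof. intros H. unfold dotp. apply sumR_ext. intros. rewrite H; auto. Qed.

Lemma proj_fix p mem u P v : is_orth_proj p mem u P -> in_span p mem u v ->
  forall j, (j < p)%nat -> mat_app p P v j = v j.
Proof.
  intros HP Hv j Hj. destruct (HP v) as [Hs Ho].
  set (d := fun j => v j - mat_app p P v j).
  assert (dotp p d d = 0).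
  { apply (orth_span p mem u). exact Ho. apply in_span_sub; auto. }
  pose proof (dotp_self_zero p d H j Hj). unfold d in H0. lra.
Qed.

Lemma proj_unique p mem u u' P Q :
  is_orth_proj p mem u P -> is_orth_proj p mem u' Q ->
  (forall l, (l < p)%nat -> mem l = true -> in_span p mem u (u' l)) ->
  (forall l, (l < p)%nat -> mem l = true -> in_span p mem u' (u l)) ->
  forall v j, (j < p)%nat -> mat_app p P v j = mat_app p Q v j.
Proof.
  intros HP HQ H1 H2 v j Hj. destruct (HP v) as [HsP HoP]. destruct (HQ v) as [HsQ HoQ].
  set (d := fun j => mat_app p P v j - mat_app p Q v j).
  assert (Hd : in_span p mem u d).
  { apply in_span_sub; auto. apply (in_span_trans p mem u'); auto. }
  assert (dotp p d d = 0).
  { apply (orth_span p mem u); auto. intros l Hl Hm.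
    rewrite (dotp_ext p d (fun j => (v j - mat_app p Q v j) - (v j - mat_app p P v j)))
      by (intros; unfold d; ring).
    rewrite dotp_minus, HoP by auto.
    rewrite (orth_span p mem u' _ (u l)); auto. ring. }
  pose proof (dotp_self_zero p d H j Hj). unfold d in H0. lra.
Qed.

Lemma mat_entries p P Q : (forall v j, (j < p)%nat -> mat_app p P v j = mat_app p Q v j) ->
  forall a b, (a < p)%nat -> (b < p)%nat -> P a b = Q a b.
Proof.
  intros H a b Ha Hb. specialize (H (fun k => if Nat.eqb k b then 1 else 0) a Ha).
  unfold mat_app in H. rewrite !sumR_delta in H by auto. exact H.
Qed.

Lemma mat_app_ext p P Q v w j : (forall a b, (a < p)%nat -> (b < p)%nat -> P a b = Q a b) ->
  (forall k, (k < p)%nat -> v k = w k) -> (j < p)%nat -> mat_app p P v j = mat_app p Q w j.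
Proof. intros H1 H2 Hj. unfold mat_app. apply sumR_ext. intros. rewrite H1, H2 by auto. reflexivity. Qed.

Lemma upd_same x k t0 t : upd (upd x k t0) k t = upd x k t.
Proof. apply functional_extensionality. intros m. unfold upd. destruct (Nat.eqb m k); auto. Qed.
Lemma upd_id x k : upd x k (x k) = x.
Proof. apply functional_extensionality. intros m. unfold upd. destruct (Nat.eqb_spec m k); subst; auto. Qed.
Lemma upd_k x k t : upd x k t k = t.
Proof. unfold upd. rewrite Nat.eqb_refl. auto. Qed.

Lemma deriv_sumR n (h : nat -> R -> R) (h' : nat -> R) t0 :
  (forall b, (b < n)%nat -> derivable_pt_lim (h b) t0 (h' b)) ->
  derivable_pt_lim (fun t => sumR n (fun b => h b t)) t0 (sumR n h').
Proof.
  induction n; intros H.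
  - unfold sumR; simpl. exact (derivable_pt_lim_const 0 t0).
  - replace (fun t => sumR (S n) (fun b => h b t)) with
      (plus_fct (fun t => sumR n (fun b => h b t)) (h n)).
    + rewrite sumR_S. apply derivable_pt_lim_plus; [apply IHn; intros; apply H; lia | apply H; lia].
    + apply functional_extensionality. intros t. unfold plus_fct. rewrite sumR_S. reflexivity.
Qed.

Lemma F_shift p pa mu s f x y k j t :
  plsem_F p pa mu s f (upd x k t) j =
  plsem_F p pa mu s f (upd y k t) j + (plsem_F p pa mu s f (upd x k 0) j - plsem_F p pa mu s f (upd y k 0) j).
Proof.
  unfold plsem_F.
  set (Sx := fun t => sumR p (fun i => if pa j i then f j i (upd x k t i) else 0)).
  set (Sy := fun t => sumR p (fun i => if pa j i then f j i (upd y k t i) else 0)).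
  assert (E1 : Sx t - Sy t = Sx 0 - Sy 0).
  { unfold Sx, Sy. rewrite <- !sumR_minus. apply sumR_ext. intros i _.
    unfold upd. destruct (Nat.eqb i k), (pa j i); ring. }
  assert (E2 : upd x k t j - upd y k t j = upd x k 0 j - upd y k 0 j).
  { unfold upd. destruct (Nat.eqb j k); ring. }
  change (sumR p (fun i => if pa j i then f j i (upd x k t i) else 0)) with (Sx t).
  change (sumR p (fun i => if pa j i then f j i (upd y k t i) else 0)) with (Sy t).
  change (sumR p (fun i => if pa j i then f j i (upd x k 0 i) else 0)) with (Sx 0).
  change (sumR p (fun i => if pa j i then f j i (upd y k 0 i) else 0)) with (Sy 0).
  replace (Sx t) with (Sy t + Sx 0 - Sy 0) by lra.
  replace (upd x k t j) with (upd y k t j + upd x k 0 j - upd y k 0 j) by lra.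
  unfold Rdiv. ring.
Qed.

Lemma dF_local p pa mu s f dF : is_partial p (plsem_F p pa mu s f) dF ->
  forall k x y j, (k < p)%nat -> (j < p)%nat -> x k = y k -> dF k x j = dF k y j.
Proof.
  intros HdF k x y j Hk Hj Exy.
  pose proof (HdF k x j Hk Hj) as Hx. pose proof (HdF k y j Hk Hj) as Hy.
  set (c := plsem_F p pa mu s f (upd x k 0) j - plsem_F p pa mu s f (upd y k 0) j).
  assert (Hy' : derivable_pt_lim (fun t => plsem_F p pa mu s f (upd y k t) j + c) (y k) (dF k y j + 0)).
  { exact (derivable_pt_lim_plus (fun t => plsem_F p pa mu s f (upd y k t) j) (fct_cte c) _ _ _ Hy
      (derivable_pt_lim_const c _)). }
  replace (fun t => plsem_F p pa mu s f (upd x k t) j) with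
    (fun t => plsem_F p pa mu s f (upd y k t) j + c) in Hx.
  - rewrite Exy in Hx. pose proof (uniqueness_limite _ _ _ _ Hx Hy'). lra.
  - apply functional_extensionality. intros t. unfold c. symmetry. apply F_shift.
Qed.

Theorem mainTheorem14
  (p : nat) (pa : nat -> nat -> bool) (mu s : nat -> R) (f : nat -> nat -> R -> R)
  (sigma sigma_inv : nat -> nat)
  (dF d2F : nat -> (nat -> R) -> nat -> R)
  (Pi : nat -> (nat -> R) -> nat -> nat -> R) :
  plsem_params p pa mu s f ->
  is_perm_with_inv p sigma sigma_inv ->
  is_partial p (plsem_F p pa mu s f) dF ->
  is_second_partial p dF d2F ->
  (forall i x, (i < p)%nat ->
     is_orth_proj p (fun l => Nat.ltb i l) (fun l => dF (sigma_inv l) x) (Pi i x)) ->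
  (forall x i j, (i < p)%nat -> (j < p)%nat ->
     d2F (sigma_inv i) x j - mat_app p (Pi i x) (d2F (sigma_inv i) x) j = 0) ->
  forall i, (i < p)%nat ->
    (forall x y a b, (a < p)%nat -> (b < p)%nat -> Pi i x a b = Pi i y a b) /\
    (forall x y j, (j < p)%nat ->
       dF (sigma_inv i) x j - mat_app p (Pi i x) (dF (sigma_inv i) x) j =
       dF (sigma_inv i) y j - mat_app p (Pi i y) (dF (sigma_inv i) y) j).
Proof.
  intros Hpar Hperm HdF Hd2 Hproj Hhyp.
  pose proof (dF_local p pa mu s f dF HdF) as Hloc.
  set (A := fun i => forall x y a b, (a < p)%nat -> (b < p)%nat -> Pi i x a b = Pi i y a b).
  set (B := fun i => forall x y j, (j < p)%nat ->
       dF (sigma_inv i) x j - mat_app p (Pi i x) (dF (sigma_inv i) x) j =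
       dF (sigma_inv i) y j - mat_app p (Pi i y) (dF (sigma_inv i) y) j).
  assert (stepB : forall i, (i < p)%nat -> A i -> B i).
  { intros i Hi HA x y j Hj. set (k := sigma_inv i).
    assert (Hk : (k < p)%nat) by (apply Hperm; auto).
    set (g := fun t => dF k (upd y k t) j - mat_app p (Pi i y) (dF k (upd y k t)) j).
    assert (Hg : forall t, derivable_pt_lim g t 0).
    { intros t. set (z := upd y k t).
      assert (Hb : forall b, (b < p)%nat -> derivable_pt_lim (fun u => dF k (upd y k u) b) t (d2F k z b)).
      { intros b Hb. pose proof (Hd2 k z b Hk Hb) as D. unfold z in D at 2.
        rewrite upd_k in D. unfold z in D.
        replace (fun u => dF k (upd (upd y k t) k u) b) with (fun u => dF k (upd y k u) b) in D; auto.
        apply functional_extensionality; intros; rewrite upd_same; auto. }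
      assert (D : derivable_pt_lim g t (d2F k z j - sumR p (fun b => Pi i y j b * d2F k z b))).
      { apply (derivable_pt_lim_minus (fun u => dF k (upd y k u) j)
          (fun u => sumR p (fun b => Pi i y j b * dF k (upd y k u) b))); [apply Hb; auto|].
        apply (deriv_sumR p (fun b u => Pi i y j b * dF k (upd y k u) b)).
        intros b Hb'. apply (derivable_pt_lim_scal (fun u => dF k (upd y k u) b)). apply Hb; auto. }
      replace 0 with (d2F k z j - sumR p (fun b => Pi i y j b * d2F k z b)); auto.
      rewrite <- (Hhyp z i j Hi Hj). fold k. f_equal. unfold mat_app. apply sumR_ext.
      intros b Hb'. rewrite (HA y z j b) by auto. reflexivity. }
    assert (Hc : constant g).
    { apply (null_derivative_1 g (fun t => exist _ 0 (Hg t))). intros; reflexivity. }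
    fold k.
    transitivity (g (x k)).
    - unfold g. rewrite (Hloc k x (upd y k (x k)) j) by (auto; rewrite upd_k; auto).
      f_equal. apply mat_app_ext; auto. intros b Hb. apply Hloc; auto. rewrite upd_k; auto.
    - rewrite (Hc (x k) (y k)). unfold g. rewrite upd_id. reflexivity. }
  assert (baseA : forall i, (i < p)%nat -> (p = i + 1)%nat -> A i).
  { intros i Hi Hp x y. apply mat_entries. intros v j Hj.
    apply (proj_unique p (fun l => Nat.ltb i l) (fun l => dF (sigma_inv l) x) (fun l => dF (sigma_inv l) y));
      auto; intros l Hl Hm; apply Nat.ltb_lt in Hm; lia. }
  assert (stepA : forall i, (S i < p)%nat -> A (S i) -> B (S i) -> A i).
  { intros i Hi HA HB.
    assert (gen_in : forall x y l, (l < p)%nat -> Nat.ltb i l = true ->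
       in_span p (fun l => Nat.ltb i l) (fun l => dF (sigma_inv l) y) (dF (sigma_inv l) x)).
    { intros x y l Hl Hm. apply Nat.ltb_lt in Hm.
      assert (Hmono : forall w, in_span p (fun l => Nat.ltb (S i) l) (fun l => dF (sigma_inv l) y) w ->
                 in_span p (fun l => Nat.ltb i l) (fun l => dF (sigma_inv l) y) w).
      { intros w. apply in_span_mono. intros m _ E. apply Nat.ltb_lt in E. apply Nat.ltb_lt. lia. }
      destruct (Nat.eq_dec l (S i)) as [->|Hne].
      - apply (in_span_ext _ _ _ _ (fun j => (dF (sigma_inv (S i)) y j - mat_app p (Pi (S i) y) (dF (sigma_inv (S i)) y) j)
             + mat_app p (Pi (S i) y) (dF (sigma_inv (S i)) x) j)).
        + intros j Hj. rewrite <- (HB x y j Hj).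
          rewrite (mat_app_ext p (Pi (S i) y) (Pi (S i) x) (dF (sigma_inv (S i)) x) (dF (sigma_inv (S i)) x))
            by auto. ring.
        + apply in_span_add; [apply in_span_sub|].
          * apply (in_span_gen p _ (fun l => dF (sigma_inv l) y) (S i)); auto. apply Nat.ltb_lt; lia.
          * apply Hmono. apply Hproj; auto.
          * apply Hmono. apply Hproj; auto.
      - apply (in_span_ext _ _ _ _ (mat_app p (Pi (S i) y) (dF (sigma_inv l) x))).
        + intros j Hj. rewrite <- (mat_app_ext p (Pi (S i) x) (Pi (S i) y) (dF (sigma_inv l) x) (dF (sigma_inv l) x)) by auto.
          symmetry. apply (proj_fix p (fun l => Nat.ltb (S i) l) (fun l => dF (sigma_inv l) x)); auto.
          apply (in_span_gen p _ (fun l => dF (sigma_inv l) x) l); auto. apply Nat.ltb_lt; lia.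
        + apply Hmono. apply Hproj; auto. }
    intros x y. apply mat_entries. intros v j Hj.
    apply (proj_unique p (fun l => Nat.ltb i l) (fun l => dF (sigma_inv l) x) (fun l => dF (sigma_inv l) y));
      try apply Hproj; try lia; auto. }
  assert (allA : forall n i, (i < p)%nat -> (p = i + 1 + n)%nat -> A i).
  { induction n; intros i Hi Hp.
    - apply baseA; lia.
    - apply stepA; [lia| apply IHn; lia | apply stepB; [lia| apply IHn; lia]]. }
  intros i Hi. assert (HAi : A i) by (apply (allA (p - i - 1)%nat); lia).
  split; [exact HAi | exact (stepB i Hi HAi)].
Qed.
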